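(* Let $A$ be an MV-algebra and $\operatorname{Der}(A)$ the set of $(\odot,\vee)$-derivations on $A$. Then: (1) if $|A|\ge 3$ then $|\operatorname{Der}(A)|\ge 5$; (2) if $|A|\ge 4$ then $|\operatorname{Der}(A)|\ge 7$; (3) if $|A|\ge 5$ then $|\operatorname{Der}(A)|\ge 13$.
   Context: An MV-algebra is an algebra $(A,\oplus,{}^*,0)$ of type $(2,1,0)$ satisfying: $x\oplus(y\oplus z)=(x\oplus y)\oplus z$, $x\oplus y=y\oplus x$, $x\oplus 0=x$, $x^{**}=x$, $x\oplus 0^*=0^*$, $(x^*\oplus y)^*\oplus y=(y^*\oplus x)^*\oplus x$. Put $1=0^*$ and $x\odot y=(x^*\oplus y^* )^*$. The natural order is $x\le y$ iff $x^*\oplus y=1$, with lattice operations $x\vee y=(x\odot y^* )\oplus y$, $x\wedge y=x\odot(x^*\oplus y)$. A $(\odot,\vee)$-derivation on $A$ is a map $d:A\to A$ with $d(x\odot y)=(d(x)\odot y)\vee(x\odot d(y))$ for all $x,y\in A$. *)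

(* Defs.v *)
From Stdlib Require Import List.
Import ListNotations.

Record MVAlgebra := {
  mv_car :> Type;
  mv_oplus : mv_car -> mv_car -> mv_car;
  mv_neg : mv_car -> mv_car;
  mv_zero : mv_car;
  mv_assoc : forall x y z, mv_oplus x (mv_oplus y z) = mv_oplus (mv_oplus x y) z;
  mv_comm : forall x y, mv_oplus x y = mv_oplus y x;
  mv_zero_r : forall x, mv_oplus x mv_zero = x;
  mv_negK : forall x, mv_neg (mv_neg x) = x;
  mv_one_absorb : forall x, mv_oplus x (mv_neg mv_zero) = mv_neg mv_zero;
  mv_luk : forall x y,
    mv_oplus (mv_neg (mv_oplus (mv_neg x) y)) y =
    mv_oplus (mv_neg (mv_oplus (mv_neg y) x)) x
}.

Arguments mv_oplus {_}.
Arguments mv_neg {_}.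
Arguments mv_zero {_}.

Section Ops.
Variable A : MVAlgebra.
Definition mv_one : A := mv_neg mv_zero.
Definition mv_odot (x y : A) : A := mv_neg (mv_oplus (mv_neg x) (mv_neg y)).
Definition mv_join (x y : A) : A := mv_oplus (mv_odot x (mv_neg y)) y.
Definition mv_meet (x y : A) : A := mv_odot x (mv_oplus (mv_neg x) y).
Definition mv_le (x y : A) : Prop := mv_oplus (mv_neg x) y = mv_one.

Definition is_odot_join_derivation (d : A -> A) : Prop :=
  forall x y : A, d (mv_odot x y) = mv_join (mv_odot (d x) y) (mv_odot x (d y)).
End Ops.

(* "the set {x | P x} has at least n elements": there are n pairwise
   distinct elements satisfying P (meaningful for infinite sets too). *)
Definition at_least (T : Type) (n : nat) (P : T -> Prop) : Prop :=
  exists l : list T, NoDup l /\ length l = n /\ Forall P l.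

(* Main.v *)
Require Import Defs.
From Stdlib Require Import List.
From Stdlib Require Import Classical ClassicalEpsilon Lia.
Import ListNotations.

Section MV.
Variable A : MVAlgebra.
Local Notation N := (@mv_neg A).
Local Notation Z := (@mv_zero A).
Local Notation one := (mv_one A).
Local Infix "⊕" := (@mv_oplus A) (at level 50, left associativity).
Local Infix "⊙" := (mv_odot A) (at level 40, left associativity).
Local Notation le := (mv_le A).
Local Notation join := (mv_join A).
Local Notation meet := (mv_meet A).

Lemma negK x : N (N x) = x. Proof. apply mv_negK. Qed.
Lemma ocomm x y : x ⊕ y = y ⊕ x. Proof. apply mv_comm. Qed.
Lemma oassoc x y z : x ⊕ (y ⊕ z) = x ⊕ y ⊕ z. Proof. apply mv_assoc. Qed.
Lemma neg_one : N one = Z. Proof. unfold mv_one. apply negK. Qed.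
Lemma neg_zero : N Z = one. Proof. reflexivity. Qed.
Lemma oplus_one x : x ⊕ one = one. Proof. apply mv_one_absorb. Qed.
Lemma one_oplus x : one ⊕ x = one. Proof. rewrite ocomm; apply oplus_one. Qed.
Lemma oplus_zero x : x ⊕ Z = x. Proof. apply mv_zero_r. Qed.
Lemma zero_oplus x : Z ⊕ x = x. Proof. rewrite ocomm; apply oplus_zero. Qed.
Lemma neg_oplus x : N x ⊕ x = one.
Proof.
  pose proof (mv_luk A x one) as H. fold (mv_one A) in H.
  rewrite oplus_one, neg_one, zero_oplus in H. symmetry; exact H.
Qed.
Lemma oplus_neg x : x ⊕ N x = one. Proof. rewrite ocomm; apply neg_oplus. Qed.

Lemma dcomm x y : x ⊙ y = y ⊙ x. Proof. unfold mv_odot. now rewrite ocomm. Qed.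
Lemma dassoc x y z : x ⊙ (y ⊙ z) = x ⊙ y ⊙ z.
Proof. unfold mv_odot. rewrite !negK. now rewrite oassoc. Qed.
Lemma done_r x : x ⊙ one = x.
Proof. unfold mv_odot. rewrite neg_one, oplus_zero. apply negK. Qed.
Lemma done_l x : one ⊙ x = x. Proof. rewrite dcomm; apply done_r. Qed.

Lemma le_ex x y : le x y <-> exists w, y = x ⊕ w.
Proof.
  unfold mv_le; split.
  - intros H. exists (y ⊙ N x). unfold mv_odot. rewrite negK.
    rewrite ocomm. pose proof (mv_luk A y x) as L. rewrite L, H, neg_one.
    symmetry; apply zero_oplus.
  - intros [w ->]. rewrite oassoc, neg_oplus. apply one_oplus.
Qed.
Lemma le_refl x : le x x. Proof. apply neg_oplus. Qed.
Lemma le_trans x y z : le x y -> le y z -> le x z.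
Proof.
  rewrite !le_ex. intros [w1 ->] [w2 ->]. exists (w1 ⊕ w2). symmetry; apply oassoc.
Qed.
Lemma join_comm x y : join x y = join y x.
Proof. unfold mv_join, mv_odot. rewrite !negK. apply mv_luk. Qed.
Lemma le_join x y : le x y -> join x y = y.
Proof.
  intros H. unfold mv_join, mv_odot. rewrite negK. unfold mv_le in H.
  rewrite H, neg_one. apply zero_oplus.
Qed.
Lemma join_idem x : join x x = x. Proof. apply le_join, le_refl. Qed.
Lemma le_antisym x y : le x y -> le y x -> x = y.
Proof.
  intros H1 H2. rewrite <- (le_join _ _ H2) at 1. rewrite join_comm. apply le_join; auto.
Qed.
Lemma le_one x : le x one. Proof. apply oplus_one. Qed.
Lemma zero_le x : le Z x. Proof. unfold mv_le. rewrite neg_zero. apply one_oplus. Qed.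
Lemma le_one_eq x : le one x -> x = one.
Proof. intros H. apply le_antisym; auto using le_one. Qed.
Lemma le_zero_eq x : le x Z -> x = Z.
Proof. intros H. apply le_antisym; auto using zero_le. Qed.
Lemma le_oplus_l x w : le x (x ⊕ w). Proof. apply le_ex. eauto. Qed.
Lemma le_oplus_r x w : le x (w ⊕ x). Proof. rewrite ocomm. apply le_oplus_l. Qed.
Lemma oplus_mono x y z : le x y -> le (x ⊕ z) (y ⊕ z).
Proof.
  rewrite !le_ex. intros [w ->]. exists w. rewrite <- !oassoc. f_equal. apply ocomm.
Qed.
Lemma le_neg x y : le x y -> le (N y) (N x).
Proof. unfold mv_le. rewrite negK, ocomm. auto. Qed.
Lemma odot_mono x y z : le x y -> le (x ⊙ z) (y ⊙ z).
Proof.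
  intros H. unfold mv_odot. apply le_neg. apply oplus_mono. apply le_neg. auto.
Qed.
Lemma odot_mono_r x y z : le x y -> le (z ⊙ x) (z ⊙ y).
Proof. intros H. rewrite (dcomm z x), (dcomm z y). now apply odot_mono. Qed.
Lemma odot_le x y : le (x ⊙ y) x.
Proof. rewrite <- (done_r x) at 2. apply odot_mono_r, le_one. Qed.
Lemma odot_eq_one x y : x ⊙ y = one -> x = one.
Proof. intros H. apply le_one_eq. rewrite <- H. apply odot_le. Qed.
Lemma odot_zero_le x y : x ⊙ y = Z -> le y (N x).
Proof.
  unfold mv_odot, mv_le. intros H. rewrite ocomm.
  rewrite <- (negK (N x ⊕ N y)), H. reflexivity.
Qed.
Lemma le_x_join x y : le x (join x y).
Proof. rewrite join_comm. unfold mv_join. apply le_oplus_r. Qed.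
Lemma meet_le x y : le (meet x y) x. Proof. apply odot_le. Qed.
Lemma meet_comm x y : meet x y = meet y x.
Proof.
  unfold mv_meet, mv_odot. f_equal.
  pose proof (mv_luk A (N y) (N x)) as L. rewrite !negK in L.
  rewrite (ocomm (N x)), (ocomm (N y)), (ocomm (N x) y), (ocomm (N y) x). exact L.
Qed.
Lemma join_le_oplus x y : le (join x y) (x ⊕ y).
Proof. unfold mv_join. apply oplus_mono, odot_le. Qed.
Lemma le_odot_meet x y : le (x ⊙ y) (meet x y).
Proof. unfold mv_meet. apply odot_mono_r, le_oplus_r. Qed.

Lemma odot_neg u : u ⊙ N u = Z.
Proof. unfold mv_odot. rewrite negK, neg_oplus. apply neg_one. Qed.

Definition ed (a b : A) (x : A) : A :=
  if excluded_middle_informative (x = one) then b else a ⊙ x.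

Lemma ed_der a b : le b a -> is_odot_join_derivation A (ed a b).
Proof.
  intros Hba x y. unfold ed.
  destruct (excluded_middle_informative (x ⊙ y = one)) as [E|E].
  - assert (Hx : x = one) by (eapply odot_eq_one; eauto).
    assert (Hy : y = one) by (rewrite dcomm in E; eapply odot_eq_one; eauto).
    subst. destruct (excluded_middle_informative (one = one)); [|congruence].
    rewrite done_r, done_l. symmetry; apply join_idem.
  - destruct (excluded_middle_informative (x = one)) as [Hx|Hx];
    destruct (excluded_middle_informative (y = one)) as [Hy|Hy]; subst.
    + rewrite done_r in E; congruence.
    + rewrite !done_l. symmetry. apply le_join. apply odot_mono; auto.
    + rewrite !done_r. rewrite join_comm. symmetry. apply le_join.
      rewrite dcomm. apply odot_mono; auto.
    + rewrite (dassoc x a y), (dcomm x a), <- dassoc. symmetry; apply join_idem.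
Qed.

Lemma neg_ne_one a : a <> Z -> N a <> one.
Proof. intros H E. apply H. rewrite <- (negK a), E. apply neg_one. Qed.

Lemma ed_inj a b a' b' : a <> Z -> a' <> Z -> ed a b = ed a' b' -> (a, b) = (a', b').
Proof.
  intros Ha Ha' E.
  assert (Eb : b = b').
  { pose proof (f_equal (fun f => f one) E) as E1. unfold ed in E1. simpl in E1.
    destruct (excluded_middle_informative (one = one)); congruence. }
  subst b'. f_equal.
  assert (K : forall x, x <> one -> a ⊙ x = a' ⊙ x).
  { intros x Hx. pose proof (f_equal (fun f => f x) E) as E1. unfold ed in E1.
    simpl in E1. destruct (excluded_middle_informative (x = one)); congruence. }
  assert (L : forall u v, u <> Z -> v <> Z -> (forall x, x <> one -> u ⊙ x = v ⊙ x) -> le v u).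
  { intros u v Hu Hv K'. pose proof (K' (N u) (neg_ne_one u Hu)) as E2.
    rewrite odot_neg in E2. symmetry in E2. apply odot_zero_le in E2.
    apply le_neg in E2. rewrite !negK in E2. exact E2. }
  apply le_antisym; apply L; auto; intros; symmetry; auto.
Qed.

Definition Fresh (f : A * A) :=
  le (snd f) (fst f) /\ fst f <> Z /\ fst f <> one /\ snd f <> Z /\ snd f <> fst f.

Lemma le_nz x y : le x y -> x <> Z -> y <> Z.
Proof. intros H Hx E. subst. apply Hx, le_zero_eq; auto. Qed.

Lemma pair_class x y : x <> y -> x <> Z -> x <> one -> y <> Z -> y <> one ->
  Fresh (y, x) \/ Fresh (x, y) \/
  (exists f1 f2, Fresh f1 /\ Fresh f2 /\ f1 <> f2) \/ y = N x.
Proof.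
  intros Hxy Hx0 Hx1 Hy0 Hy1.
  destruct (classic (le x y)) as [Lxy|Lxy].
  { left. unfold Fresh; simpl; repeat split; auto. }
  destruct (classic (le y x)) as [Lyx|Lyx].
  { right; left. unfold Fresh; simpl; repeat split; auto. }
  right; right.
  destruct (classic (meet x y = Z)) as [M0|M0].
  - destruct (classic (join x y = one)) as [J1|J1].
    + right. apply le_antisym.
      * apply odot_zero_le. apply le_zero_eq. rewrite <- M0. apply le_odot_meet.
      * unfold mv_le. rewrite negK. apply le_one_eq. rewrite <- J1. apply join_le_oplus.
    + left. exists (join x y, x), (join x y, y).
      assert (Jx : join x y <> x).
      { intros E. apply Lyx. rewrite <- E, join_comm. apply le_x_join. }
      assert (Jy : join x y <> y).
      { intros E. apply Lxy. rewrite <- E. apply le_x_join. }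
      assert (Lj : le x (join x y)) by apply le_x_join.
      assert (Lj' : le y (join x y)) by (rewrite join_comm; apply le_x_join).
      unfold Fresh; simpl; repeat split; auto.
      * eapply le_nz; eauto.
      * eapply le_nz; eauto.
      * intros E; injection E; auto.
  - left. exists (x, meet x y), (y, meet x y).
    assert (Mx : meet x y <> x).
    { intros E. apply Lxy. rewrite <- E, meet_comm. apply meet_le. }
    assert (My : meet x y <> y).
    { intros E. apply Lyx. rewrite <- E. apply meet_le. }
    unfold Fresh; simpl; repeat split; auto.
    + apply meet_le.
    + rewrite meet_comm. apply meet_le.
    + intros E; injection E; auto.
Qed.

Lemma fresh3 p q r : p <> q -> p <> r -> q <> r ->
  p <> Z -> p <> one -> q <> Z -> q <> one -> r <> Z -> r <> one ->
  exists f1 f2, Fresh f1 /\ Fresh f2 /\ f1 <> f2.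
Proof.
  intros Hpq Hpr Hqr Hp0 Hp1 Hq0 Hq1 Hr0 Hr1.
  pose proof (negK p) as Kp. pose proof (negK q) as Kq. pose proof (negK r) as Kr.
  destruct (pair_class p q) as [H1|[H1|[H1|H1]]]; auto;
  destruct (pair_class p r) as [H2|[H2|[H2|H2]]]; auto;
  destruct (pair_class q r) as [H3|[H3|[H3|H3]]]; auto;
  try congruence;
  match goal with
  | H1 : Fresh ?f1, H2 : Fresh ?f2 |- _ =>
      exists f1, f2; split; [exact H1|split; [exact H2|intro E; injection E; intros; congruence]]
  end.
Qed.

Lemma zero_ne_one (x y : A) : x <> y -> Z <> one.
Proof.
  intros H E. apply H. rewrite <- (oplus_zero x), <- (oplus_zero y), E, !oplus_one.
  reflexivity.
Qed.

Lemma extract (l : list A) : NoDup l -> exists l', NoDup l' /\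
  length l <= length l' + 2 /\ Forall (fun x => x <> Z /\ x <> one) l'.
Proof.
  intros Hl.
  set (f := fun x : A => if excluded_middle_informative (x <> Z /\ x <> one) then true else false).
  exists (filter f l). split; [apply NoDup_filter; auto|split].
  - rewrite <- (filter_length f l).
    assert (length (filter (fun x => negb (f x)) l) <= length [Z; one]).
    { apply NoDup_incl_length. apply NoDup_filter; auto.
      intros x Hx. apply filter_In in Hx. destruct Hx as [_ Hx]. unfold f in Hx.
      destruct (excluded_middle_informative (x <> Z /\ x <> one)) as [|n]; [discriminate|].
      simpl. apply not_and_or in n. destruct n as [n|n]; apply NNPP in n; auto. }
    simpl in H. lia.
  - apply Forall_forall. intros x Hx. apply filter_In in Hx. destruct Hx as [_ Hx].
    unfold f in Hx. destruct (excluded_middle_informative (x <> Z /\ x <> one)); auto; discriminate.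
Qed.

Lemma count (l : list (A * A)) : NoDup l ->
  Forall (fun f => le (snd f) (fst f) /\ fst f <> Z) l ->
  at_least (A -> A) (length l) (is_odot_join_derivation A).
Proof.
  intros Hn Hf. exists (map (fun f => ed (fst f) (snd f)) l). split; [|split].
  - apply NoDup_map_NoDup_ForallPairs; auto.
    intros [a b] [a' b'] Ha Hb E. rewrite Forall_forall in Hf.
    apply Hf in Ha. apply Hf in Hb. simpl in *. apply ed_inj; tauto.
  - apply length_map.
  - apply Forall_map. eapply Forall_impl; [|exact Hf]. intros [a b] [H _]. apply ed_der; auto.
Qed.
End MV.

Ltac nodup_tac :=
  repeat constructor; simpl; intuition congruence.

Theorem corollary3p15 (A : MVAlgebra) :
  (at_least A 3 (fun _ => True) ->
     at_least (A -> A) 5 (is_odot_join_derivation A)) /\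
  (at_least A 4 (fun _ => True) ->
     at_least (A -> A) 7 (is_odot_join_derivation A)) /\
  (at_least A 5 (fun _ => True) ->
     at_least (A -> A) 13 (is_odot_join_derivation A)).
Proof.
  assert (G : forall n, at_least A (n + 2) (fun _ => True) ->
     mv_zero <> mv_one A /\ exists l', NoDup l' /\ n <= length l' /\
       Forall (fun x => x <> mv_zero /\ x <> mv_one A) l').
  { intros n [l [Hn [Hl _]]]. destruct (extract A l Hn) as [l' [H1 [H2 H3]]].
    split.
    - destruct l as [|x [|y l]]; simpl in Hl; try lia.
      apply (zero_ne_one A x y). intros E; subst. inversion Hn; subst. simpl in *; tauto.
    - exists l'. split; auto. split; auto. lia. }
  split; [|split]; intros H.
  - destruct (G 1 H) as [Z1 [l' [Hn [Hl Hf]]]].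
    destruct l' as [|p l']; simpl in Hl; try lia.
    inversion Hf as [|? ? [Hp0 Hp1] _]; subst.
    set (L := [(mv_one A, mv_zero); (mv_one A, mv_one A); (mv_one A, p); (p, mv_zero); (p, p)]).
    change 5 with (length L). apply count.
    + unfold L; nodup_tac.
    + unfold L; repeat constructor; simpl; auto using le_refl, le_one, zero_le.
  - destruct (G 2 H) as [Z1 [l' [Hn [Hl Hf]]]].
    destruct l' as [|p [|q l']]; simpl in Hl; try lia.
    inversion Hf as [|? ? [Hp0 Hp1] Hf']; subst.
    inversion Hf' as [|? ? [Hq0 Hq1] _]; subst.
    assert (Hpq : p <> q) by (inversion Hn; subst; simpl in *; intros E; subst; tauto).
    set (L := [(mv_one A, mv_zero); (mv_one A, mv_one A); (mv_one A, p); (p, mv_zero); (p, p);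
               (mv_one A, q); (q, q)]).
    change 7 with (length L). apply count.
    + unfold L; nodup_tac.
    + unfold L; repeat constructor; simpl; auto using le_refl, le_one, zero_le.
  - destruct (G 3 H) as [Z1 [l' [Hn [Hl Hf]]]].
    destruct l' as [|p [|q [|r l']]]; simpl in Hl; try lia.
    inversion Hf as [|? ? [Hp0 Hp1] Hf']; subst.
    inversion Hf' as [|? ? [Hq0 Hq1] Hf'']; subst.
    inversion Hf'' as [|? ? [Hr0 Hr1] _]; subst.
    assert (Hpq : p <> q) by (inversion Hn; subst; simpl in *; intros E; subst; tauto).
    assert (Hpr : p <> r) by (inversion Hn; subst; simpl in *; intros E; subst; tauto).
    assert (Hqr : q <> r) by (inversion Hn; subst; inversion H3; subst; simpl in *; intros E; subst; tauto).
    destruct (fresh3 A p q r) as [[a1 b1] [[a2 b2] [F1 [F2 F12]]]]; auto.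
    destruct F1 as [L1 [A10 [A11 [B10 B11]]]]. destruct F2 as [L2 [A20 [A21 [B20 B21]]]].
    simpl in *.
    set (L := [(mv_one A, mv_zero); (mv_one A, mv_one A); (mv_one A, p); (p, mv_zero); (p, p);
               (mv_one A, q); (q, mv_zero); (q, q); (mv_one A, r); (r, mv_zero); (r, r);
               (a1, b1); (a2, b2)]).
    change 13 with (length L). apply count.
    + unfold L; nodup_tac.
    + unfold L; repeat constructor; simpl; auto using le_refl, le_one, zero_le.
Qed.
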